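(* In the setting below, the directed graph $\tilde H$ contains no red cycle and no blue cycle.
   Context: Setting: $G$ is a graph; $S_1,T_1,S_2,T_2\subseteq V(G)$ are pairwise disjoint sets of $k$ vertices each, all of degree $1$ in $G$, with $(S_1,T_1)$ and $(S_2,T_2)$ each routable in $G$ (i.e. connected by $k$ node-disjoint paths). $H$ is an $(S_1,T_1,S_2,T_2)$-minimal minor of $G$: a minor of $G$ containing the vertices of $S_1\cup T_1\cup S_2\cup T_2$ as vertices (each such $x$ corresponds to a branch set $\{x\}$), in which both pairs are routable, and such that for every edge $e$ of $H$, deleting $e$ or contracting $e$ destroys one of these properties. $\mathcal{R}$ is a set of $k$ node-disjoint paths routing $(S_1,T_1)$ in $H$ (''red paths'') and $\mathcal{B}$ a set of $k$ node-disjoint paths routing $(S_2,T_2)$ in $H$ (''blue paths''). $\tilde H$ is the directed graph on $V(H)$ containing each edge of a red path, directed along the path from $S_1$ to $T_1$ (a red edge), and each edge of a blue path, directed along the path from $S_2$ to $T_2$ (a blue edge). A blue cycle is a simple directed cycle $C$ in $\tilde H$ that can be partitioned into consecutive edge-disjoint segments $\sigma_1,\dots,\sigma_{2r}$, $r>0$, where each $\sigma_{2i}$ consists of a single red edge and each $\sigma_{2i-1}$ is a nonempty path consisting only of blue edges. A red cycle is defined the same way with the roles of red and blue exchanged. *)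

(* Defs.v *)
From mathcomp Require Import all_boot.
Set Implicit Arguments. Unset Strict Implicit. Unset Printing Implicit Defensive.

Section Defs.

Definition simple_graph (V : finType) (E : rel V) : Prop :=
  symmetric E /\ irreflexive E.

Definition degree (V : finType) (E : rel V) (x : V) : nat := #|[set y | E x y]|.

Definition ST_path (V : finType) (E : rel V) (S T : {set V}) (p : seq V) : bool :=
  if p is x :: p' then [&& path E x p', uniq p, x \in S & last x p' \in T]
  else false.

Definition routing (V : finType) (E : rel V) (S T : {set V}) (k : nat)
    (P : seq (seq V)) : Prop :=
  [/\ size P = k, all (ST_path E S T) P &
      pairwise (fun p q : seq V => [disjoint p & q]) P].

Definition routable (V : finType) (E : rel V) (S T : {set V}) (k : nat) : Prop :=
  exists P, routing E S T k P.

Definition connected_in (V : finType) (E : rel V) (A : {set V}) : Prop :=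
  forall u v, u \in A -> v \in A ->
    connect [rel x y | [&& E x y, x \in A & y \in A]] u v.

Definition minor_model (VG VH : finType) (EG : rel VG) (EH : rel VH)
    (phi : VH -> {set VG}) : Prop :=
  [/\ forall h, phi h != set0,
      forall h, connected_in EG (phi h),
      forall h h', h != h' -> [disjoint phi h & phi h'] &
      forall h h', EH h h' -> exists u v, [/\ u \in phi h, v \in phi h' & EG u v]].

Definition tlift (VG VH : finType) (phi : VH -> {set VG}) (S : {set VG}) : {set VH} :=
  [set h | [exists x in S, phi h == [set x]]].

(* every terminal x is a vertex of H, i.e. has branch set {x} *)
Definition terminals_ok (VG VH : finType) (S1 T1 S2 T2 : {set VG})
    (phi : VH -> {set VG}) : Prop :=
  forall x, x \in S1 :|: T1 :|: S2 :|: T2 -> exists h, phi h = [set x].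

Definition good_minor (VG : finType) (EG : rel VG) (S1 T1 S2 T2 : {set VG}) (k : nat)
    (VH : finType) (EH : rel VH) (phi : VH -> {set VG}) : Prop :=
  [/\ minor_model EG EH phi, terminals_ok S1 T1 S2 T2 phi,
      routable EH (tlift phi S1) (tlift phi T1) k &
      routable EH (tlift phi S2) (tlift phi T2) k].

Definition del_edge (V : finType) (E : rel V) (a b : V) : rel V :=
  fun u v => E u v && ~~ (((u == a) && (v == b)) || ((u == b) && (v == a))).

(* contraction of the edge ab: b is merged into a; vertex set V(H) \ {b} *)
Definition cvert (V : finType) (b : V) := {h : V | h != b}.

Definition contr_edge (V : finType) (E : rel V) (a b : V) : rel (cvert b) :=
  fun u v => (val u != val v) &&
    [|| E (val u) (val v), (val u == a) && E b (val v) | (val v == a) && E b (val u)].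

Arguments contr_edge {V} E a b.

Definition contr_model (VG V : finType) (phi : V -> {set VG}) (a b : V)
    : cvert b -> {set VG} :=
  fun w => if val w == a then phi a :|: phi b else phi (val w).

Arguments contr_model {VG V} phi a b.

Definition minimal_minor (VG : finType) (EG : rel VG) (S1 T1 S2 T2 : {set VG}) (k : nat)
    (VH : finType) (EH : rel VH) (phi : VH -> {set VG}) : Prop :=
  good_minor EG S1 T1 S2 T2 k EH phi /\
  forall a b, EH a b ->
    ~ good_minor EG S1 T1 S2 T2 k (del_edge EH a b) phi /\
    ~ good_minor EG S1 T1 S2 T2 k (contr_edge EH a b) (contr_model phi a b).

(* Arcs of the coloured digraph H~: (u, v, c) is an arc u -> v; c = true means
   it comes from a path of family Main, c = false from family Single. *)
Definition arc_in (V : finType) (Main Single : seq (seq V)) (a : V * V * bool) : bool :=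
  let: (u, v, c) := a in
  if c then has (infix [:: u; v]) Main else has (infix [:: u; v]) Single.

(* A simple directed cycle of H~ given by its cyclic list of arcs, partitioned
   (after choosing a starting point) into consecutive segments
   sigma_1 ... sigma_{2r}, r > 0, with sigma_{2i} a single Single-arc and
   sigma_{2i-1} a nonempty sequence of Main-arcs. *)
Definition alt_cycle (V : finType) (Main Single : seq (seq V)) : Prop :=
  exists cyc : seq (V * V * bool),
    [/\ cyc != [::],
        all (arc_in Main Single) cyc,
        map (fun a => a.1.2) cyc = rot 1 (map (fun a => a.1.1) cyc),
        uniq (map (fun a => a.1.1) cyc) &
        exists n (ss : seq (seq (V * V * bool))) r,
          [/\ 0 < r, size ss = 2 * r, rot n cyc = flatten ss &
              forall i, i < size ss ->
                let s := nth [::] ss i in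
                if odd i then (size s == 1) && all (fun a => ~~ a.2) s
                else (s != [::]) && all (fun a => a.2) s]].

(* blue cycle: blue segments, single red edges; red cycle: roles exchanged *)
Definition blue_cycle (V : finType) (R B : seq (seq V)) : Prop := alt_cycle B R.
Definition red_cycle (V : finType) (R B : seq (seq V)) : Prop := alt_cycle R B.

End Defs.

(* Main.v *)
Require Import Defs.
From mathcomp Require Import all_boot.
Set Implicit Arguments. Unset Strict Implicit. Unset Printing Implicit Defensive.

Definition wsys (V : finType) (E : rel V) (S T : {set V}) (k : nat)
  (nx : V -> option V) (I : pred V) (Src : seq V) : Prop :=
 [/\ uniq Src /\ size Src = k,
     forall s, s \in Src -> [/\ s \in S, I s & forall x, I x -> nx x <> Some s],
     forall x y, I x -> nx x = Some y -> I y /\ E x y,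
     forall x, I x -> nx x = None -> x \in T &
     forall x x' y, I x -> I x' -> nx x = Some y -> nx x' = Some y -> x = x'].

Section Walk.
Variables (V : finType) (E : rel V) (S T : {set V}) (k : nat)
  (nx : V -> option V) (I : pred V) (Src : seq V).
Hypothesis W : wsys E S T k nx I Src.

Let f x := odflt x (nx x).
Let good s n := forall i, i < n -> nx (iter i f s) <> None.

Lemma good_I s n : s \in Src -> good s n -> forall i, i <= n -> I (iter i f s).
Proof.
case: W => _ hS hinv _ _ sS g; elim=> [|i IH] hi /=; first by case: (hS s sS).
have hI := IH (ltnW hi); rewrite /f; case e: (nx (iter i f s)) => [y|] /=.
  by case: (hinv _ _ hI e).
by case: (g i hi).
Qed.

Lemma key s s' i j : s \in Src -> s' \in Src -> good s i -> good s' j ->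
  iter i f s = iter j f s' -> s = s' /\ i = j.
Proof.
case: W => _ hS hinv _ hinj sS sS'.
elim: i j => [|i IH] [|j] gi gj /=.
- by move=> ->.
- move=> e; exfalso; have hI := good_I sS' gj (leqnn j.+1).
  have hIj : I (iter j f s') by apply: (good_I sS' gj); apply: leqnSn.
  case: (hS s sS) => _ _ H; apply: (H _ hIj); rewrite e /= /f.
  by case e2: (nx (iter j f s')) => [y|] /=; [|case: (gj j (ltnSn j))].
- move=> e; exfalso.
  have hIi : I (iter i f s) by apply: (good_I sS gi); apply: leqnSn.
  case: (hS s' sS') => _ _ H; apply: (H _ hIi); rewrite -e /= /f.
  by case e2: (nx (iter i f s)) => [y|] /=; [|case: (gi i (ltnSn i))].
- rewrite /f => e.
  have hIi : I (iter i f s) by apply: (good_I sS gi); apply: leqnSn.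
  have hIj : I (iter j f s') by apply: (good_I sS' gj); apply: leqnSn.
  case e1: (nx (iter i f s)) e => [y|]; last by case: (gi i (ltnSn i)).
  case e2: (nx (iter j f s')) => [y'|] /= e; last by case: (gj j (ltnSn j)).
  subst y'.
  have := hinj _ _ _ hIi hIj e1 e2 => /IH [].
  + by move=> t ht; apply: gi; apply: ltnW.
  + by move=> t ht; apply: gj; apply: ltnW.
  by move=> -> ->.
Qed.

Let P s n := nx (iter n f s) == None.
Let m s := find (P s) (iota 0 #|V|.+1).

Lemma m_props s : s \in Src -> P s (m s) /\ good s (m s).
Proof.
move=> sS.
have hg : forall n, n <= #|V|.+1 -> good s n \/ exists2 i, i < n & P s i.
  elim=> [|n IH] hn; first by left.
  case: (IH (ltnW hn)) => [g|[i hi pi]]; last by right; exists i => //; apply: ltnW.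
  case e: (P s n); first by right; exists n.
  left => i; rewrite ltnS leq_eqVlt => /orP[/eqP->|/g //].
  by move=> h; move: e; rewrite /P h eqxx.
have hh : has (P s) (iota 0 #|V|.+1).
  case: (hg #|V|.+1 (leqnn _)) => [g|[i hi pi]]; last first.
    by apply/hasP; exists i => //; rewrite mem_iota.
  exfalso.
  pose F := fun i : 'I_#|V|.+1 => iter i f s.
  have inj : injective F.
    move=> i j; rewrite /F => e; apply: val_inj => /=.
    have gi : good s i by move=> t ht; apply: g; apply: (ltn_trans ht).
    have gj : good s j by move=> t ht; apply: g; apply: (ltn_trans ht).
    by case: (key sS sS gi gj e).
  by have := leq_card F inj; rewrite card_ord ltnn.
have hlt : m s < #|V|.+1 by rewrite -[X in _ < X](size_iota 0) -has_find.
split.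
  have := nth_find 0 hh; rewrite nth_iota //.
move=> i hi; have := before_find 0 hi; rewrite nth_iota ?add0n; last first.
  by apply: (ltn_trans hi).
by rewrite /P => /eqP.
Qed.

Definition walk s := traject f s (m s).+1.

Lemma walk_nth s i : i < (m s).+1 -> nth s (walk s) i = iter i f s.
Proof. by move=> hi; rewrite /walk nth_traject. Qed.

Lemma walk_mem s x : x \in walk s -> exists2 i, i < (m s).+1 & x = iter i f s.
Proof.
move=> /(nthP s) [i]; rewrite /walk size_traject => hi <-.
by exists i => //; rewrite nth_traject.
Qed.

Lemma good_le s n i : good s n -> i <= n -> good s i.
Proof. by move=> g hi t ht; apply: g; apply: (leq_trans ht). Qed.

Lemma walk_ST s : s \in Src -> ST_path E S T (walk s).
Proof.
move=> sS; case: (m_props sS) => Pm gm.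
case: W => _ hS hinv hsink _.
rewrite /walk trajectS /ST_path; apply/and4P; split.
- apply/(pathP s) => i; rewrite size_traject => hi.
  rewrite -trajectS nth_traject; last by apply: ltnW.
  rewrite (set_nth_default (f s)) ?size_traject // nth_traject // -iterSr.
  have hI : I (iter i f s) by apply: (good_I sS gm); apply: ltnW.
  rewrite /= {2}/f; case e: (nx (iter i f s)) => [y|] /=; last by case: (gm i hi).
  by case: (hinv _ _ hI e).
- rewrite -trajectS; apply/(uniqP s) => i j; rewrite !inE size_traject => hi hj.
  rewrite !nth_traject // => e.
  by case: (key sS sS (good_le gm _) (good_le gm _) e).
- by case: (hS s sS).
- rewrite last_traject; apply: hsink; first by apply: (good_I sS gm).
  by apply/eqP.
Qed.

Lemma walk_disj s s' : s \in Src -> s' \in Src -> s != s' ->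
  [disjoint walk s & walk s'].
Proof.
move=> sS sS' ne; rewrite disjoint_has; apply/hasPn => x hx; apply/negP => hx'.
case: (walk_mem hx) => i hi ex.
case: (walk_mem hx') => j hj; rewrite ex => e.
case: (m_props sS) => _ gm; case: (m_props sS') => _ gm'.
case: (key sS sS' (good_le gm _) (good_le gm' _) e) => // e' _.
by rewrite e' eqxx in ne.
Qed.

Lemma wsys_routable : routable E S T k.
Proof.
exists (map walk Src); case: W => [[uS szS] _ _ _ _]; split.
- by rewrite size_map.
- by apply/allP => p /mapP [s sS ->]; apply: walk_ST.
- rewrite pairwise_map; move: uS; rewrite uniq_pairwise.
  apply: (sub_in_pairwise (P := mem Src)); last by apply/allP.
  by move=> x y hx hy /= ne; apply: walk_disj.
Qed.

End Walk.

Lemma wsys_routable_ex (V : finType) (E : rel V) (S T : {set V}) (k : nat)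
  (nx : V -> option V) (I : pred V) (Src : seq V) :
  wsys E S T k nx I Src -> routable E S T k.
Proof. exact: wsys_routable. Qed.

Lemma uniq_split (T : eqType) (p s1 r t1 r' : seq T) x : uniq p ->
  p = s1 ++ x :: r -> p = t1 ++ x :: r' -> s1 = t1 /\ r = r'.
Proof.
move=> u e1 e2.
have hs : size s1 = size t1.
  have h1 : index x p = size s1.
    rewrite e1 index_cat; move: u; rewrite e1 cat_uniq /= => /and3P[_ /norP[/negPf -> _] _].
    by rewrite /= eqxx addn0.
  have h2 : index x p = size t1.
    rewrite e2 index_cat; move: u; rewrite e2 cat_uniq /= => /and3P[_ /norP[/negPf -> _] _].
    by rewrite /= eqxx addn0.
  by rewrite -h1 -h2.
split.
  have h1 : take (size t1) p = t1 by rewrite e2 take_size_cat.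
  have h2 : take (size s1) p = s1 by rewrite e1 take_size_cat.
  by rewrite -h1 -h2 hs.
have h1 : drop (size t1).+1 p = r' by rewrite e2 -cat_rcons drop_size_cat ?size_rcons.
have h2 : drop (size s1).+1 p = r by rewrite e1 -cat_rcons drop_size_cat ?size_rcons.
by rewrite -h1 -h2 hs.
Qed.

Section Routing.
Variables (V : finType) (E : rel V) (S T : {set V}) (k : nat) (P : seq (seq V)).
Hypothesis hP : routing E S T k P.

Definition arcP x y := has (infix [:: x; y]) P.
Definition nxP x := [pick y | arcP x y].
Definition onP x := has (fun p : seq V => x \in p) P.
Definition SrcP := pmap ohead P.

Lemma path_ST p : p \in P -> ST_path E S T p.
Proof. by case: hP => _ /allP h _; apply: h. Qed.

Lemma path_uniq p : p \in P -> uniq p.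
Proof. by move/path_ST; case: p => // a p /and4P[]. Qed.

Lemma same_path p q x : p \in P -> q \in P -> x \in p -> x \in q -> p = q.
Proof.
move=> pP qP xp xq; case: hP => _ _ /(pairwiseP [::]) hpw.
move: pP qP => /(nthP [::]) [i hi ei] /(nthP [::]) [j hj ej].
have [lt|gt|eq] := ltngtP i j.
- have := hpw i j hi hj lt; rewrite ei ej disjoint_has => /hasPn /(_ x xp).
  by rewrite xq.
- have := hpw j i hj hi gt; rewrite ei ej disjoint_has => /hasPn /(_ x xq).
  by rewrite xp.
- by rewrite -ei -ej eq.
Qed.

Lemma arc_in_path x y : arcP x y -> exists2 p, p \in P & infix [:: x; y] p.
Proof. by move/hasP. Qed.

Lemma infix_split (p : seq V) x y : infix [:: x; y] p -> exists s1 s2, p = s1 ++ x :: y :: s2.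
Proof. by move/infixP => [s1 [s2 ->]]; exists s1, s2. Qed.

Lemma arc_same x y x' y' p q : p \in P -> q \in P -> infix [:: x; y] p ->
  infix [:: x'; y'] q -> (x = x' \/ y = y') -> p = q.
Proof.
move=> pP qP /infix_split [s1 [s2 e1]] /infix_split [t1 [t2 e2]] [ex|ey].
  rewrite -ex in e2.
  by apply: (same_path (x:=x)) => //; rewrite ?e1 ?e2 mem_cat inE eqxx orbT.
rewrite -ey in e2.
by apply: (same_path (x:=y)) => //; rewrite ?e1 ?e2 mem_cat !inE eqxx !orbT.
Qed.

Lemma arc_func x y y' : arcP x y -> arcP x y' -> y = y'.
Proof.
move=> /arc_in_path [p pP ip] /arc_in_path [q qP iq].
have epq := arc_same pP qP ip iq (or_introl erefl); subst q.
move: ip iq => /infix_split [s1 [s2 e1]] /infix_split [t1 [t2 e2]].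
by case: (uniq_split (path_uniq pP) e1 e2) => _ [].
Qed.

Lemma arc_inj x x' y : arcP x y -> arcP x' y -> x = x'.
Proof.
move=> /arc_in_path [p pP ip] /arc_in_path [q qP iq].
have epq := arc_same pP qP ip iq (or_intror erefl); subst q.
move: ip iq => /infix_split [s1 [s2 e1]] /infix_split [t1 [t2 e2]].
have e1' : p = rcons s1 x ++ y :: s2 by rewrite cat_rcons.
have e2' : p = rcons t1 x' ++ y :: t2 by rewrite cat_rcons.
case: (uniq_split (path_uniq pP) e1' e2') => /(congr1 (last x)).
by rewrite !last_rcons.
Qed.

Lemma arc_E x y : arcP x y -> E x y.
Proof.
move=> /arc_in_path [p pP /infix_split [s1 [s2 e]]].
have := path_ST pP; case: p e pP => // h p' e _ /and4P [hp _ _ _].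
case: s1 e => [|z s1] /= [-> ->] in hp *; first by case/andP: hp.
by move: hp; rewrite cat_path => /andP[_] /= /and3P[_ ->].
Qed.

Lemma arc_no2 x y : arcP x y -> arcP y x -> False.
Proof.
move=> /arc_in_path [p pP ip] /arc_in_path [q qP iq].
have epq : p = q.
  apply: (same_path (x:=x)) => //; [apply: (mem_infix ip)|apply: (mem_infix iq)];
  by rewrite !inE eqxx ?orbT.
subst q; have u := path_uniq pP.
move: ip iq => /infix_split [s1 [s2 e1]] /infix_split [t1 [t2 e2]].
have e2' : p = rcons t1 y ++ x :: t2 by rewrite cat_rcons.
case: (uniq_split u e1 e2') => es1 _.
move: u; rewrite e1 es1 cat_uniq => /and3P [_ /hasPn /(_ y)] .
by rewrite !inE mem_rcons inE eqxx orbT => /(_ isT).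
Qed.

Lemma arc_on x y : arcP x y -> onP x /\ onP y.
Proof.
move=> /arc_in_path [p pP /infix_split [s1 [s2 e]]]; split; apply/hasP; exists p => //;
  by rewrite e mem_cat !inE eqxx ?orbT.
Qed.

Lemma on_next x : onP x -> (exists y, arcP x y) \/ x \in T.
Proof.
move=> /hasP [p pP xp]; have hST := path_ST pP.
case/splitPr: xp pP hST => s1 s2 pP hST.
case: s2 pP hST => [|y s2] pP hST; last first.
  by left; exists y; apply/hasP; exists (s1 ++ [:: x, y & s2]) => //; apply: infix_infix.
right; move: hST; case: s1 {pP} => [|z s1] /=.
  by case/andP.
by rewrite /ST_path last_cat => /and4P [].
Qed.

Lemma nxP_some x y : nxP x = Some y <-> arcP x y.
Proof.
rewrite /nxP; case: pickP => [z hz|h]; split => //.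
- by case=> <-.
- by move=> hy; rewrite (arc_func hz hy).
- by move=> hy; move: (h y); rewrite hy.
Qed.

Lemma nxP_none x : nxP x = None -> forall y, ~ arcP x y.
Proof. by move=> e y /nxP_some; rewrite e. Qed.

Lemma SrcP_mem s : s \in SrcP -> exists p, [/\ p \in P, s \in S, s \in p & p = s :: behead p].
Proof.
rewrite /SrcP mem_pmap => /mapP [p pP]; case: p pP => // z p pP [->].
exists (z :: p); split => //; first by case/and4P: (path_ST pP).
by rewrite inE eqxx.
Qed.

Lemma SrcP_nopred s x : s \in SrcP -> ~ arcP x s.
Proof.
case/SrcP_mem => p [pP _ sp ep] /arc_in_path [q qP iq].
have epq : q = p.
  by move: iq => /infix_split [s1 [s2 e]]; apply: (same_path (x := s)) => //;
     rewrite e mem_cat !inE eqxx !orbT.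
subst q; move: iq => /infix_split [s1 [s2 e]].
have e' : p = rcons s1 x ++ s :: s2 by rewrite cat_rcons.
have e0 : p = [::] ++ s :: behead p by [].
case: (uniq_split (path_uniq pP) e0 e') => /(congr1 size).
by rewrite size_rcons.
Qed.

Lemma nopred_S x : onP x -> (forall y, ~ arcP y x) -> x \in S.
Proof.
move=> /hasP [p pP xp] h; have hST := path_ST pP.
case/splitPr: xp pP hST => s1 s2 pP hST.
case/lastP: s1 pP hST => [|s1 z] pP hST.
  by move: hST => /= /and4P [].
exfalso; apply: (h z); apply/hasP; exists (rcons s1 z ++ x :: s2) => //.
by rewrite -cats1 -catA /=; apply: infix_infix.
Qed.

Lemma SrcP_uniq_size : uniq SrcP /\ size SrcP = k.
Proof.
case: hP => hsz hall hpw; split; last first.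
  rewrite /SrcP size_pmap -hsz -[RHS]count_predT; apply: eq_in_count => p pP.
  by have := path_ST pP; case: p {pP}.
rewrite /SrcP; elim: P hall hpw {hsz} => [|p P' IH] //= /andP [hp hall].
move=> /andP [hd hpw].
case: p hp hd => // z p hp hd /=; rewrite IH // andbT.
apply/negP; rewrite mem_pmap => /mapP [q qP]; case: q qP => // w q qP [ew].
subst w; move/allP: hd => /(_ _ qP); rewrite disjoint_has => /hasPn /(_ z).
by rewrite !inE eqxx => /(_ isT).
Qed.

Lemma routing_wsys : wsys E S T k nxP onP SrcP.
Proof.
split.
- exact: SrcP_uniq_size.
- move=> s sS; split.
  + by case: (SrcP_mem sS) => p [].
  + by case: (SrcP_mem sS) => p [pP _ sp _]; apply/hasP; exists p.
  + by move=> x _ /nxP_some; apply: SrcP_nopred.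
- by move=> x y _ /nxP_some h; split; [case: (arc_on h)|apply: arc_E].
- move=> x hx hn; case: (on_next hx) => // [[y hy]].
  by case: (nxP_none hn hy).
- by move=> x x' y _ _ /nxP_some h1 /nxP_some h2; apply: (arc_inj h1 h2).
Qed.

End Routing.

Section Contr.
Variables (V : finType) (E : rel V) (S T : {set V}) (k : nat)
  (nx : V -> option V) (I : pred V) (Src : seq V).
Hypotheses (hsym : symmetric E) (hirr : irreflexive E).
Hypothesis W : wsys E S T k nx I Src.
Variables (a b : V).
Hypotheses (hab : E a b) (haS : a \notin S) (hbS : b \notin S)
  (haT : a \notin T) (hbT : b \notin T) (Ia : I a) (Ib : I b).
Hypothesis hor : (nx a = Some b /\ nx b <> Some a) \/ (nx b = Some a /\ nx a <> Some b).

Lemma ab_neq : a != b.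
Proof. by apply/eqP => e; move: hab; rewrite e hirr. Qed.

Definition a' : cvert b := exist _ a ab_neq.
Definition cc (x : V) : cvert b := insubd a' x.
Definition gg (w : cvert b) : V := if (val w == a) && (nx a == Some b) then b else val w.
Definition nxc (w : cvert b) : option (cvert b) := omap cc (nx (gg w)).
Definition Ic : pred (cvert b) := fun w => I (val w).
Definition Srcc := map cc Src.

Lemma val_cc x : val (cc x) = if x != b then x else a.
Proof. by rewrite /cc val_insubd. Qed.

Lemma wb (w : cvert b) : val w != b.
Proof. by case: w. Qed.

Lemma I_gg w : Ic w -> I (gg w).
Proof. by rewrite /gg; case: ifP. Qed.

Lemma cc_eq y y' : cc y = cc y' -> y = y' \/ (y = a /\ y' = b) \/ (y = b /\ y' = a).
Proof.
move/(congr1 val); rewrite !val_cc.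
case: (y =P b) => [->|/eqP nb]; case: (y' =P b) => [->|/eqP nb'] //=; auto.
Qed.

Lemma gg_cases w : (val w != a /\ gg w = val w) \/
  (val w = a /\ ((nx a = Some b /\ gg w = b) \/ (nx b = Some a /\ nx a <> Some b /\ gg w = a))).
Proof.
rewrite /gg; case: (val w =P a) => [e|/eqP ne]; last by left.
right; split => //; case: hor => [[h1 h2]|[h1 h2]].
  by left; rewrite h1 eqxx.
right; split => //; split => //; case: eqP => //.
Qed.

Lemma wbF (w : cvert b) : val w = b -> False.
Proof. by move=> e; move: (wb w); rewrite e eqxx. Qed.

Lemma gg_inj w w' : gg w = gg w' -> w = w'.
Proof.
have hn := ab_neq.
case: (gg_cases w) => [[n1 e1]|[e1 [[h1 g1]|[h1 [h2 g1]]]]];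
case: (gg_cases w') => [[n2 e2]|[e2 [[h3 g2]|[h3 [h4 g2]]]]];
rewrite ?g1 ?g2 ?e1 ?e2 => e; apply: val_inj; rewrite ?e1 ?e2 //.
all: try by case: (wbF e).
all: try by case: (wbF (esym e)).
all: try by rewrite h3 in h2.
all: try by rewrite h1 in h4.
all: try by move/eqP: n1.
all: try by move/eqP: n2.
all: try by rewrite -e eqxx in n2.
all: try by rewrite e eqxx in n1.
Qed.

Lemma contr_wsys : wsys (@contr_edge V E a b) [set w | val w \in S] [set w | val w \in T] k nxc Ic Srcc.
Proof.
case: W => [[uS szS] hS hinv hsink hinj].
have hn := ab_neq.
have srcab : forall s, s \in Src -> s != a /\ s != b.
  move=> s /hS [sS _ _]; split; apply/eqP => e; subst s.
  - by move: haS; rewrite sS.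
  - by move: hbS; rewrite sS.
split.
- split; last by rewrite size_map.
  rewrite map_inj_in_uniq // => s s' hs hs' /(congr1 val).
  by rewrite !val_cc; case: (srcab s hs) => _ ->; case: (srcab s' hs') => _ ->.
- move=> s' /mapP [s hs ->]; case: (srcab s hs) => na nb.
  case: (hS s hs) => sS Is hns; split.
  + by rewrite inE val_cc nb.
  + by rewrite /Ic val_cc nb.
  + move=> w hw; rewrite /nxc; case e: (nx (gg w)) => [y|] //= [].
    case/cc_eq => [ey|[[ey ey']|[ey ey']]].
    * by subst y; apply: (hns _ (I_gg hw) e).
    * by rewrite ey' eqxx in nb.
    * by rewrite ey' eqxx in na.
- move=> w z hw; rewrite /nxc; case e: (nx (gg w)) => [y|] //= [<-].
  have Ig := I_gg hw; case: (hinv _ _ Ig e) => Iy Ey.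
  split; first by rewrite /Ic val_cc; case: ifP.
  rewrite /contr_edge val_cc.
  case: (gg_cases w) => [[n1 e1]|[e1 [[h1 g1]|[h1 [h2 g1]]]]].
  + rewrite e1 /= in Ey e n1.
    case: (y =P b) => [ey|/eqP ny] /=.
    * subst y; by rewrite n1 eqxx /= (hsym b (sval w)) Ey !orbT.
    * by rewrite Ey andbT; apply/eqP => ex; move: Ey; rewrite ex hirr.
  + rewrite e1 g1 in Ey e *.
    have nyb : y != b by apply/eqP => ey; move: Ey; rewrite ey hirr.
    have nya : y != a by apply/eqP => ey; case: hor => [[_ h]|[_ h]];
      [apply: h; rewrite e ey| by apply: h].
    by rewrite nyb eq_sym nya /= eqxx Ey orbT.
  + rewrite e1 g1 in Ey e *.
    have nya : y != a by apply/eqP => ey; move: Ey; rewrite ey hirr.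
    have nyb : y != b by apply/eqP => ey; apply: h2; rewrite e ey.
    by rewrite nyb eq_sym nya Ey.
- move=> w hw; rewrite /nxc; case e: (nx (gg w)) => [y|] //= _.
  have := hsink _ (I_gg hw) e; rewrite inE.
  case: (gg_cases w) => [[n1 e1]|[e1 [[h1 g1]|[h1 [h2 g1]]]]].
  + by rewrite e1.
  + by rewrite g1 (negPf hbT).
  + by rewrite g1 (negPf haT).
- move=> w w' z hw hw'; rewrite /nxc.
  case e: (nx (gg w)) => [y|] //= [<-].
  case e': (nx (gg w')) => [y'|] //= /esym [ec].
  have Ig := I_gg hw; have Ig' := I_gg hw'.
  case: (cc_eq ec) => [ey|[[ey ey']|[ey ey']]].
  + subst y'; apply: gg_inj; exact: (hinj _ _ _ Ig Ig' e e').
  + subst y y'; exfalso.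
    case: hor => [[h1 h1']|[h1 h1']].
    * have ga := hinj _ _ _ Ia Ig' h1 e'.
      case: (gg_cases w') => [[n1 e1]|[e1 [[h3 g1]|[h3 [h4 g1]]]]].
      -- by move: n1; rewrite -e1 -ga eqxx.
      -- by move: hn; rewrite g1 in ga; rewrite ga eqxx.
      -- by rewrite h1 in h4.
    * have gb := hinj _ _ _ Ib Ig h1 e.
      case: (gg_cases w) => [[n1 e1]|[e1 [[h3 g1]|[h3 [h4 g1]]]]].
      -- by move: (wb w); rewrite -e1 -gb eqxx.
      -- by case: (h1' h3).
      -- by move: hn; rewrite g1 in gb; rewrite gb eqxx.
  + subst y y'; exfalso.
    case: hor => [[h1 h1']|[h1 h1']].
    * have ga := hinj _ _ _ Ia Ig h1 e.
      case: (gg_cases w) => [[n1 e1]|[e1 [[h3 g1]|[h3 [h4 g1]]]]].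
      -- by move: n1; rewrite -e1 -ga eqxx.
      -- by move: hn; rewrite g1 in ga; rewrite ga eqxx.
      -- by rewrite h1 in h4.
    * have gb := hinj _ _ _ Ib Ig' h1 e'.
      case: (gg_cases w') => [[n1 e1]|[e1 [[h3 g1]|[h3 [h4 g1]]]]].
      -- by move: (wb w'); rewrite -e1 -gb eqxx.
      -- by case: (h1' h3).
      -- by move: hn; rewrite g1 in gb; rewrite gb eqxx.
Qed.

End Contr.

Section Cyc.
Variables (V : finType) (M Sg : seq (seq V)).
Notation arc := (V * V * bool)%type.

Definition econ : rel arc := fun a a' => a.1.2 == a'.1.1.
Definition ecol : rel arc := fun a a' => a.2 || a'.2.

Lemma path_econ (x : arc) s y : map (fun a => a.1.2) (x :: s) = rcons (map (fun a => a.1.1) s) y.1.1 ->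
  path econ x (rcons s y).
Proof.
elim: s x => [|x' s IH] x /=.
  by case=> e; rewrite /= /econ e eqxx.
by case=> e1 e2; rewrite /econ e1 eqxx /=; apply: IH.
Qed.

Lemma all_true_path (x : arc) s : all (fun a => a.2) (x :: s) -> path ecol x s.
Proof.
elim: s x => [|y s IH] x //= /and3P [hx hy hs].
by rewrite /ecol hx /=; apply: IH; rewrite /= hy.
Qed.

Definition altern (ss : seq (seq arc)) := forall i, i < size ss ->
  let s := nth [::] ss i in
  if odd i then (size s == 1) && all (fun a => ~~ a.2) s
  else (s != [::]) && all (fun a => a.2) s.

Lemma altern_flatten r ss : size ss = 2 * r -> altern ss ->
  flatten ss = [::] \/ exists x s, [/\ flatten ss = x :: s, x.2 & path ecol x s].
Proof.
elim: r ss => [|r IH] ss.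
  by rewrite muln0 => /size0nil ->; left.
case: ss => [|s0 [|s1 ss]] hsz0 halt; rewrite /= mulnS in hsz0; try by [].
have hsz : size ss = 2 * r by case: hsz0.
have h0 := halt 0 isT; have h1 := halt 1 isT; rewrite /= in h0 h1.
have halt' : altern ss by move=> i hi; have := halt i.+2; rewrite /= !ltnS negbK; apply.
case/andP: h0 => ne0 al0; case/andP: h1 => sz1 al1.
case: s1 sz1 al1 {halt} => [|z [|]] //= _; rewrite andbT => hz.
case: s0 ne0 al0 => [|x s0] // _ al0.
right; exists x, (s0 ++ z :: flatten ss); split => //.
  by case/andP: al0.
rewrite cat_path all_true_path //=.
have hl : (last x s0).2.
  by apply: (allP al0); rewrite mem_last.
rewrite /ecol hl /=.
case: (IH ss hsz halt') => [->|[y [s [-> hy hp]]]] //=.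
by rewrite hy orbT.
Qed.

Lemma alt_cycle_struct : alt_cycle M Sg ->
  exists L : seq arc, [/\ uniq (map (fun a => a.1.1) L), all (arc_in M Sg) L,
    forall a, a \in L -> (next L a).1.1 = a.1.2 /\ (a.2 || (next L a).2) &
    exists u v, (u, v, false) \in L].
Proof.
case=> cyc [ne hall hrot hu [n [ss [r [hr hsz hflat halt]]]]].
have cyce : cycle econ cyc.
  case: cyc ne hrot {hall hu hflat} => // x s _ hrot.
  by apply: path_econ; rewrite hrot /= /rot /= drop0 take0 cats1.
set L := rot n cyc.
have hL : uniq (map (fun a => a.1.1) L) by rewrite map_rot rot_uniq.
have uL : uniq L by move: hL; apply: map_uniq.
have cycc : cycle ecol L.
  rewrite /L hflat; case: (altern_flatten hsz halt) => [->|[x [s [-> hx hp]]]] //=.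
  by rewrite rcons_path hp /ecol hx orbT.
exists L; split => //.
- by apply/allP => a; rewrite mem_rot => /(allP hall).
- move=> a aL; split.
    have hc := next_cycle cyce; have := hc a; rewrite -(mem_rot n) -/L => /(_ aL) /eqP; rewrite -(next_rot n) -/L.
      by move=> ->.
    exact: (map_uniq hu).
  exact: next_cycle cycc aL.
- have h1lt : 1 < size ss by rewrite hsz; case: r hr {hsz halt} => // r' _; rewrite mulnS.
  have := halt 1 h1lt => /= /andP [].
  case e: (nth [::] ss 1) => [|z [|]] //= _; rewrite andbT => hz.
  exists z.1.1, z.1.2; have -> : (z.1.1, z.1.2, false) = z by case: z hz {e} => [[]] ? ? [].
  rewrite /L hflat; apply/flattenP; exists [:: z]; last by rewrite inE.
  by rewrite -e; apply: mem_nth.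
Qed.

End Cyc.

Lemma uniq_map_inj (T1 T2 : eqType) (f : T1 -> T2) (s : seq T1) :
  uniq (map f s) -> {in s &, injective f}.
Proof.
elim: s => [|x s IH] //= /andP [hx hu] a a'; rewrite !inE.
case/orP => [/eqP->|ha]; case/orP => [/eqP->|ha'] // e.
- by move: hx; rewrite e (map_f f ha').
- by move: hx; rewrite -e (map_f f ha).
- exact: IH.
Qed.

Section Surgery.
Variables (V : finType) (E : rel V) (Sa Ta Sb Tb : {set V}) (k : nat) (M Sg : seq (seq V)).
Hypotheses (hsym : symmetric E) (hM : routing E Sa Ta k M) (hS : routing E Sb Tb k Sg).
Notation arc := (V * V * bool)%type.
Variable L : seq arc.
Hypotheses (hu : uniq (map (fun a => a.1.1) L)) (hall : all (arc_in M Sg) L)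
  (hnx : forall a, a \in L -> (next L a).1.1 = a.1.2 /\ (a.2 || (next L a).2)).

Lemma uL : uniq L. Proof. exact: map_uniq hu. Qed.

Lemma src_uniq a a' : a \in L -> a' \in L -> a.1.1 = a'.1.1 -> a = a'.
Proof. by move=> aL a'L e; apply: (uniq_map_inj hu aL a'L e). Qed.

Lemma tgt_uniq a a' : a \in L -> a' \in L -> a.1.2 = a'.1.2 -> a = a'.
Proof.
move=> aL a'L e.
have : next L a = next L a'.
  apply: src_uniq; rewrite ?mem_next //.
  by rewrite (hnx aL).1 (hnx a'L).1.
by move/(congr1 (prev L)); rewrite !(prev_next uL).
Qed.

Lemma prev_props a : a \in L -> prev L a \in L /\ (prev L a).1.2 = a.1.1 /\ ((prev L a).2 || a.2).
Proof.
move=> aL; have pL : prev L a \in L by rewrite mem_prev.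
have := hnx pL; rewrite (next_prev uL) => [[h1 h2]]; split => //.
Qed.

Lemma arcM x y : (x, y, true) \in L -> arcP M x y.
Proof. by move/(allP hall). Qed.

Lemma arcS x y : (x, y, false) \in L -> arcP Sg x y.
Proof. by move/(allP hall). Qed.

Lemma single_in u v : (u, v, false) \in L -> exists p, (p, u, true) \in L.
Proof.
move=> aL; case: (prev_props aL) => pL [ht hc].
rewrite orbF in hc; exists (prev L (u, v, false)).1.1.
by move: pL ht hc; case: (prev L _) => [[x y] c] /= hL ey hc; subst y; move: hL; rewrite hc.
Qed.

Lemma single_out u v : (u, v, false) \in L -> exists w, (v, w, true) \in L.
Proof.
move=> aL; case: (hnx aL) => hs hc; have nL : next L (u, v, false) \in L by rewrite mem_next.
exists (next L (u, v, false)).1.2.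
by move: nL hs hc; case: (next L _) => [[x y] c] /= hL ex hc; subst x; move: hL; rewrite hc.
Qed.

Definition sgpred (x : V) : option V := [pick u | (u, x, false) \in L].
Definition interior (x : V) : bool :=
  [exists p, (p, x, true) \in L] && [exists q, (x, q, true) \in L].
Definition nx' (x : V) : option V :=
  if sgpred x is Some u then Some u else nxP M x.
Definition I' (x : V) : bool := onP M x && ~~ interior x.

Lemma sgpred_some x u : (u, x, false) \in L -> sgpred x = Some u.
Proof.
move=> aL; rewrite /sgpred; case: pickP => [u' hu'|h]; last by move: (h u); rewrite aL.
by have := tgt_uniq hu' aL erefl => -[->].
Qed.

Lemma sgpred_spec x u : sgpred x = Some u -> (u, x, false) \in L.
Proof. by rewrite /sgpred; case: pickP => // u' hu' [<-]. Qed.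

Lemma main_out_bad x y : I' x -> sgpred x = None -> (x, y, true) \in L -> False.
Proof.
move=> /andP [_ ni] hn aL; case: (prev_props aL) => pL [ht _].
move: pL ht; case: (prev L _) => [[p x'] c] /= pL ex; subst x'.
case: c pL => pL.
- by move/negP: ni; apply; apply/andP; split; apply/existsP; [exists p | exists y].
- by rewrite (sgpred_some pL) in hn.
Qed.

Lemma surg_wsys : wsys E Sa Ta k nx' I' (SrcP M).
Proof.
case: (routing_wsys hM) => hU hsrc hinv hsink hinj.
split => //.
- move=> s sS; case: (hsrc s sS) => sSa Is hns; split => //.
  + rewrite /I' Is /=; apply/negP => /andP [/existsP [p hp] _].
    exact: (SrcP_nopred hM sS (arcM hp)).
  + move=> x hx; rewrite /nx'; case e: (sgpred x) => [u|].
    * case=> eu; subst u; case: (single_in (sgpred_spec e)) => p hp.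
      exact: (SrcP_nopred hM sS (arcM hp)).
    * exact: (hns _ (andP hx).1).
- move=> x y hx; rewrite /nx'; case e: (sgpred x) => [u|].
  + case=> <-; have hL := sgpred_spec e.
    case: (single_in hL) => p hp; split.
    * rewrite /I'; case: (arc_on (arcM hp)) => _ -> /=.
      apply/negP => /andP [_ /existsP [q hq]].
      by have := src_uniq hq hL erefl.
    * by rewrite hsym; apply: (arc_E hS (arcS hL)).
  + move=> hy; have ha := (nxP_some hM x y).1 hy.
    case: (hinv _ _ (andP hx).1 hy) => Iy Ey; split => //.
    rewrite /I' Iy /=; apply/negP => /andP [/existsP [p hp] _].
    have ep := arc_inj hM (arcM hp) ha; subst p.
    exact: (main_out_bad hx e hp).
- move=> x hx; rewrite /nx'; case: (sgpred x) => // hn.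
  exact: (hsink _ (andP hx).1 hn).
- move=> x x' y hx hx'; rewrite /nx'.
  case e: (sgpred x) => [u|]; case e': (sgpred x') => [u'|].
  + case=> <- [eu']; subst u'.
    by have := src_uniq (sgpred_spec e) (sgpred_spec e') erefl => -[].
  + case=> <- hy'; have hL := sgpred_spec e.
    case: (single_in hL) => p hp.
    have ep := arc_inj hM (arcM hp) ((nxP_some hM _ _).1 hy'); subst p.
    by case: (main_out_bad hx' e' hp).
  + move=> hy [eu']; subst u'; have hL := sgpred_spec e'.
    case: (single_in hL) => p hp.
    have ep := arc_inj hM (arcM hp) ((nxP_some hM _ _).1 hy); subst p.
    by case: (main_out_bad hx e hp).
  + move=> h1 h2; exact: (hinj _ _ _ (andP hx).1 (andP hx').1 h1 h2).
Qed.

Lemma surg_v u v : (u, v, false) \in L -> nx' v = Some u /\ I' v.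
Proof.
move=> hL; rewrite /nx' (sgpred_some hL); split => //.
case: (single_out hL) => w hw; rewrite /I'.
case: (arc_on (arcM hw)) => -> _ /=.
apply/negP => /andP [/existsP [p hp] _].
by have := tgt_uniq hp hL erefl.
Qed.

Lemma surg_u u v : (u, v, false) \in L -> nx' u = nxP M u /\ I' u.
Proof.
move=> hL; case: (single_in hL) => p hp.
have hn : sgpred u = None.
  rewrite /sgpred; case: pickP => // u' hu'.
  by have := tgt_uniq hp hu' erefl.
rewrite /nx' hn; split => //; rewrite /I'.
case: (arc_on (arcM hp)) => _ -> /=.
apply/negP => /andP [_ /existsP [q hq]].
by have := src_uniq hq hL erefl.
Qed.

End Surgery.

Lemma no_alt (V : finType) (E : rel V) (Sa Ta Sb Tb : {set V}) k M Sg :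
  symmetric E -> irreflexive E ->
  routing E Sa Ta k M -> routing E Sb Tb k Sg ->
  (forall h y z, h \in Sa :|: Ta :|: Sb :|: Tb -> E h y -> E h z -> y = z) ->
  [disjoint Sb & Ta] -> [disjoint Sa & Tb] ->
  (forall a b, E a b -> a \notin Sa :|: Ta :|: Sb :|: Tb -> b \notin Sa :|: Ta :|: Sb :|: Tb ->
    routable (@contr_edge V E a b) [set w | val w \in Sa] [set w | val w \in Ta] k ->
    routable (@contr_edge V E a b) [set w | val w \in Sb] [set w | val w \in Tb] k -> False) ->
  ~ alt_cycle M Sg.
Proof.
move=> hsym hirr hM hS hdeg hd1 hd2 hmin hcyc.
case: (alt_cycle_struct hcyc) => L [hu hall hnx [u [v hL]]].
case: (single_in hu hnx hL) => p hp.
case: (single_out hnx hL) => w hw.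
have Mpu := arcM hall hp; have Mvw := arcM hall hw; have Suv := arcS hall hL.
have Euv := arc_E hS Suv.
have C_u : u \in Sa :|: Ta :|: Sb :|: Tb -> arcP M v u.
  move=> ht; have Eup : E u p by rewrite hsym; apply: (arc_E hM Mpu).
  by rewrite -(hdeg _ _ _ ht Eup Euv).
have C_v : v \in Sa :|: Ta :|: Sb :|: Tb -> arcP M v u.
  move=> ht; have Evw := arc_E hM Mvw; have Evu : E v u by rewrite hsym.
  by rewrite (hdeg _ _ _ ht Evu Evw).
have ntu : u \notin Sa :|: Ta :|: Sb :|: Tb.
  apply/negP => ht; have Mvu := C_u ht.
  have uSb : u \in Sb.
    apply: (nopred_S hS (arc_on Suv).1) => y Syu.
    have Euy : E u y by rewrite hsym; apply: (arc_E hS Syu).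
    have ey := hdeg _ _ _ ht Euy Euv; subst y.
    exact: (arc_no2 hS Suv Syu).
  have uTa : u \in Ta.
    case: (on_next hM (arc_on Mvu).2) => // [[y Muy]].
    have ey := hdeg _ _ _ ht (arc_E hM Muy) Euv; subst y.
    by case: (arc_no2 hM Muy Mvu).
  by move: (disjointFr hd1 uSb); rewrite uTa.
have ntv : v \notin Sa :|: Ta :|: Sb :|: Tb.
  apply/negP => ht; have Mvu := C_v ht.
  have Evu : E v u by rewrite hsym.
  have vSa : v \in Sa.
    apply: (nopred_S hM (arc_on Mvu).1) => y Myv.
    have Evy : E v y by rewrite hsym; apply: (arc_E hM Myv).
    have ey := hdeg _ _ _ ht Evy Evu; subst y.
    exact: (arc_no2 hM Myv Mvu).
  have vTb : v \in Tb.
    case: (on_next hS (arc_on Suv).2) => // [[y Svy]].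
    have ey := hdeg _ _ _ ht (arc_E hS Svy) Evu; subst y.
    by case: (arc_no2 hS Suv Svy).
  by move: (disjointFr hd2 vSa); rewrite vTb.
move: (ntu) (ntv); rewrite !inE => /norP [/norP [/norP [nuSa nuTa] nuSb] nuTb] /norP [/norP [/norP [nvSa nvTa] nvSb] nvTb].
apply: (hmin u v Euv ntu ntv).
- case: (nxP M u =P Some v) => [hMuv|hMuv].
  + apply: wsys_routable_ex.
    apply: (contr_wsys hsym hirr (routing_wsys hM) Euv) => //.
    * exact: (arc_on Mpu).2.
    * exact: (arc_on Mvw).1.
    * left; split => // /(nxP_some hM) Mvu.
      exact: (arc_no2 hM ((nxP_some hM _ _).1 hMuv) Mvu).
  + apply: wsys_routable_ex.
    case: (surg_u hu hall hnx hL) => nxu Iu.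
    case: (surg_v hu hall hnx hL) => nxv Iv.
    apply: (contr_wsys hsym hirr (surg_wsys hsym hM hS hu hall hnx) Euv) => //.
    by right; split => //; rewrite nxu.
- apply: wsys_routable_ex.
  apply: (contr_wsys hsym hirr (routing_wsys hS) Euv) => //.
  + exact: (arc_on Suv).1.
  + exact: (arc_on Suv).2.
  + left; split; first by apply/(nxP_some hS).
    move=> /(nxP_some hS) Svu; exact: (arc_no2 hS Suv Svu).
Qed.

Lemma disjP (T : finType) (A B : {pred T}) :
  (forall x, x \in A -> x \in B -> False) -> [disjoint A & B].
Proof.
move=> h; rewrite disjoint_subset; apply/subsetP => x hA.
by rewrite inE; apply/negP => hB; apply: (h x hA hB).
Qed.

Lemma disjE (T : finType) (A B : {pred T}) x : [disjoint A & B] -> x \in A -> x \in B -> False.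
Proof. by move=> d hA hB; move: (disjointFr d hA); rewrite hB. Qed.

Lemma routable_mono (V : finType) (E : rel V) (S T S' T' : {set V}) k :
  {subset S <= S'} -> {subset T <= T'} -> routable E S T k -> routable E S' T' k.
Proof.
move=> sS sT [P [h1 h2 h3]]; exists P; split => //.
apply/allP => p /(allP h2); case: p => // x p /and4P [a b c d].
by rewrite /ST_path a b sS // sT.
Qed.

Section Top.
Variables (VG VH : finType) (EG : rel VG) (EH : rel VH) (phi : VH -> {set VG}).
Hypotheses (hG : simple_graph EG) (hH : simple_graph EH) (hMM : minor_model EG EH phi).

Lemma tlift_disj (X Y : {set VG}) : [disjoint X & Y] -> [disjoint tlift phi X & tlift phi Y].
Proof.
move=> d; apply: disjP => h; rewrite !inE => /existsP [x /andP [xX /eqP e1]]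
  /existsP [y /andP [yY /eqP e2]].
have exy : x = y by apply: set1_inj; rewrite -e1 -e2.
subst y; exact: (disjE d xX yY).
Qed.

Lemma tlift_mem (X : {set VG}) h : h \in tlift phi X -> exists2 x, x \in X & phi h = [set x].
Proof. by rewrite inE => /existsP [x /andP [xX /eqP e]]; exists x. Qed.

Lemma deg_tlift (S1 T1 S2 T2 : {set VG}) :
  (forall x, x \in S1 :|: T1 :|: S2 :|: T2 -> degree EG x = 1) ->
  forall h y z, h \in tlift phi S1 :|: tlift phi T1 :|: tlift phi S2 :|: tlift phi T2 ->
  EH h y -> EH h z -> y = z.
Proof.
move=> hdeg h y z ht ey ez.
have [x xU ex] : exists2 x, x \in S1 :|: T1 :|: S2 :|: T2 & phi h = [set x].
  move: ht; rewrite !in_setU -!orbA => /or4P [] /tlift_mem [x xX ex]; exists x => //;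
  by rewrite !inE xX ?orbT.
case: hMM => _ _ hdis hedge.
case: (hedge _ _ ey) => g1 [g2 [g1h g2y E12]].
case: (hedge _ _ ez) => g3 [g4 [g3h g4z E34]].
move: g1h g3h; rewrite ex !inE => /eqP e1 /eqP e3; subst g1 g3.
have := hdeg x xU; rewrite /degree => /eqP /cards1P [t et].
have : g2 \in [set t0 | EG x t0] by rewrite inE.
have : g4 \in [set t0 | EG x t0] by rewrite inE.
rewrite et !inE => /eqP e4 /eqP e2; subst g2 g4.
case: (y =P z) => // /eqP ne.
by case: (disjE (hdis _ _ ne) g2y g4z).
Qed.

Variables (a b : VH).
Hypothesis (hab : EH a b).

Lemma ab_neq' : a != b.
Proof. by case: hMM => _ _ _ _; apply/eqP => e; move: hab; rewrite e; case: hH => _ ->. Qed.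

Lemma cm_sub (w : cvert b) : phi (val w) \subset @contr_model VG VH phi a b w.
Proof.
rewrite /contr_model; case: (val w =P a) => [->|_] //.
exact: subsetUl.
Qed.

Lemma cm_subb (w : cvert b) : val w = a -> phi b \subset @contr_model VG VH phi a b w.
Proof. by rewrite /contr_model => ->; rewrite eqxx subsetUr. Qed.

Lemma connect_mono (A B : {set VG}) u v : A \subset B ->
  connect [rel x y | [&& EG x y, x \in A & y \in A]] u v ->
  connect [rel x y | [&& EG x y, x \in B & y \in B]] u v.
Proof.
move=> sAB; apply: connect_sub => x y /= /and3P [exy xA yA].
by apply: connect1; rewrite /= exy !(subsetP sAB).
Qed.

Lemma contr_minor : minor_model EG (@contr_edge VH EH a b) (@contr_model VG VH phi a b).
Proof.
have hn := ab_neq'.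
case: hMM => hne hcon hdis hedge; split.
- move=> w; apply/negP => /eqP e; move: (hne (val w)).
  by have := cm_sub w; rewrite e subset0 => /eqP ->; rewrite eqxx.
- move=> w; rewrite /contr_model; case: (val w =P a) => [ea|_]; last exact: hcon.
  case: (hedge _ _ hab) => g1 [g2 [g1a g2b E12]].
  have sa : phi a \subset phi a :|: phi b by apply: subsetUl.
  have sb : phi b \subset phi a :|: phi b by apply: subsetUr.
  have ca : forall u v, u \in phi a -> v \in phi a -> connect [rel x y | [&& EG x y, x \in phi a :|: phi b & y \in phi a :|: phi b]] u v.
    by move=> u v hu hv; apply: (connect_mono sa); apply: hcon.
  have cb : forall u v, u \in phi b -> v \in phi b -> connect [rel x y | [&& EG x y, x \in phi a :|: phi b & y \in phi a :|: phi b]] u v.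
    by move=> u v hu hv; apply: (connect_mono sb); apply: hcon.
  have g1U : g1 \in phi a :|: phi b by rewrite inE g1a.
  have g2U : g2 \in phi a :|: phi b by rewrite inE g2b orbT.
  move=> u v; rewrite !inE => /orP [hu|hu] /orP [hv|hv].
  + exact: ca.
  + apply: (connect_trans (ca _ _ hu g1a)); apply: (connect_trans _ (cb _ _ g2b hv)).
    by apply: connect1; rewrite /= E12 g1U g2U.
  + apply: (connect_trans (cb _ _ hu g2b)); apply: (connect_trans _ (ca _ _ g1a hv)).
    by apply: connect1; case: hG => hs _; rewrite /= hs E12 g1U g2U.
  + exact: cb.
- move=> w w' ne; rewrite /contr_model.
  have vne : val w != val w' by apply/eqP => e; move/eqP: ne; apply; apply: val_inj.
  case: (val w =P a) => [ea|na]; case: (val w' =P a) => [ea'|na'].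
  + by move: vne; rewrite ea ea' eqxx.
  + apply: disjP => x; rewrite inE => /orP [hx|hx] hx'.
    * by apply: (disjE (hdis a (val w') _) hx hx'); rewrite eq_sym; apply/eqP.
    * apply: (disjE (hdis b (val w') _) hx hx').
      by rewrite eq_sym; case: (w').
  + apply: disjP => x hx; rewrite inE => /orP [hx'|hx'].
    * by apply: (disjE (hdis (val w) a _) hx hx'); apply/eqP.
    * apply: (disjE (hdis (val w) b _) hx hx').
      by case: (w).
  + exact: hdis.
- move=> w z; rewrite /contr_edge => /andP [ne /or3P [e|/andP [/eqP ea e]|/andP [/eqP ea e]]].
  + case: (hedge _ _ e) => g1 [g2 [h1 h2 h3]].
    by exists g1, g2; split => //; [apply: (subsetP (cm_sub w)) | apply: (subsetP (cm_sub z))].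
  + case: (hedge _ _ e) => g1 [g2 [h1 h2 h3]].
    by exists g1, g2; split => //; [apply: (subsetP (cm_subb ea)) | apply: (subsetP (cm_sub z))].
  + case: (hedge _ _ e) => g1 [g2 [h1 h2 h3]].
    exists g2, g1; split.
    * exact: (subsetP (cm_sub w)).
    * exact: (subsetP (cm_subb ea)).
    * by case: hG => hs _; rewrite hs.
Qed.

End Top.

Lemma union_perm (T : finType) (A B C D : {set T}) x :
  x \in C :|: D :|: A :|: B -> x \in A :|: B :|: C :|: D.
Proof.
rewrite !in_setU => /orP [/orP [/orP [->|->]|->]|->]; by rewrite ?orbT.
Qed.

Section Final.
Variables (VG VH : finType) (EG : rel VG) (EH : rel VH) (phi : VH -> {set VG}).
Variables (S1 T1 S2 T2 : {set VG}) (k : nat).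
Hypotheses (hG : simple_graph EG) (hH : simple_graph EH) (hMM : minor_model EG EH phi)
  (hTok : terminals_ok S1 T1 S2 T2 phi).

Let U := tlift phi S1 :|: tlift phi T1 :|: tlift phi S2 :|: tlift phi T2.

Lemma sub_lift (a b : VH) (X : {set VG}) : a \notin tlift phi X ->
  {subset [set w : cvert b | val w \in tlift phi X] <= tlift (@contr_model VG VH phi a b) X}.
Proof.
move=> na w; rewrite inE => /tlift_mem [x xX ex].
have nwa : val w != a by apply/eqP => e; move: na; rewrite -e inE; apply/negP/negPn/existsP;
  exists x; rewrite xX ex eqxx.
rewrite inE; apply/existsP; exists x; rewrite xX /contr_model (negPf nwa) ex eqxx.
by [].
Qed.

Lemma contr_good (a b : VH) : EH a b -> a \notin U -> b \notin U ->
  routable (@contr_edge VH EH a b) [set w | val w \in tlift phi S1] [set w | val w \in tlift phi T1] k ->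
  routable (@contr_edge VH EH a b) [set w | val w \in tlift phi S2] [set w | val w \in tlift phi T2] k ->
  good_minor EG S1 T1 S2 T2 k (@contr_edge VH EH a b) (@contr_model VG VH phi a b).
Proof.
move=> hab na nb r1 r2.
move: (na) (nb); rewrite /U !in_setU => /norP [/norP [/norP [na1 na2] na3] na4]
  /norP [/norP [/norP [nb1 nb2] nb3] nb4].
split.
- exact: contr_minor.
- move=> x hx; case: (hTok hx) => h eh.
  have hb : h != b.
    apply/eqP => e; subst h; move: hx; rewrite !in_setU => /orP [/orP [/orP [hx|hx]|hx]|hx].
    + by move: nb1; rewrite inE; move/negP; apply; apply/existsP; exists x; rewrite hx eh eqxx.
    + by move: nb2; rewrite inE; move/negP; apply; apply/existsP; exists x; rewrite hx eh eqxx.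
    + by move: nb3; rewrite inE; move/negP; apply; apply/existsP; exists x; rewrite hx eh eqxx.
    + by move: nb4; rewrite inE; move/negP; apply; apply/existsP; exists x; rewrite hx eh eqxx.
  have ha : h != a.
    apply/eqP => e; subst h; move: hx; rewrite !in_setU => /orP [/orP [/orP [hx|hx]|hx]|hx].
    + by move: na1; rewrite inE; move/negP; apply; apply/existsP; exists x; rewrite hx eh eqxx.
    + by move: na2; rewrite inE; move/negP; apply; apply/existsP; exists x; rewrite hx eh eqxx.
    + by move: na3; rewrite inE; move/negP; apply; apply/existsP; exists x; rewrite hx eh eqxx.
    + by move: na4; rewrite inE; move/negP; apply; apply/existsP; exists x; rewrite hx eh eqxx.
  exists (exist _ h hb); rewrite /contr_model /= (negPf ha) //.
- by apply: (routable_mono _ _ r1); apply: sub_lift.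
- by apply: (routable_mono _ _ r2); apply: sub_lift.
Qed.

End Final.

Unset Implicit Arguments. Set Strict Implicit.

Theorem lemma2p3
  (VG : finType) (EG : rel VG) (S1 T1 S2 T2 : {set VG}) (k : nat)
  (hG : simple_graph EG)
  (hd1 : [disjoint S1 & T1]) (hd2 : [disjoint S1 & S2]) (hd3 : [disjoint S1 & T2])
  (hd4 : [disjoint T1 & S2]) (hd5 : [disjoint T1 & T2]) (hd6 : [disjoint S2 & T2])
  (hcard : [/\ #|S1| = k, #|T1| = k, #|S2| = k & #|T2| = k])
  (hdeg : forall x, x \in S1 :|: T1 :|: S2 :|: T2 -> degree EG x = 1)
  (hr1 : routable EG S1 T1 k) (hr2 : routable EG S2 T2 k)
  (VH : finType) (EH : rel VH) (phi : VH -> {set VG})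
  (hH : simple_graph EH)
  (hmin : minimal_minor EG S1 T1 S2 T2 k EH phi)
  (R B : seq (seq VH))
  (hR : routing EH (tlift phi S1) (tlift phi T1) k R)
  (hB : routing EH (tlift phi S2) (tlift phi T2) k B) :
  ~ red_cycle R B /\ ~ blue_cycle R B.
Proof.
case: hmin => [[hMM hTok _ _] hmin2].
case: (hH) => hsym hirr.
have deg := deg_tlift hMM hdeg.
split.
- apply: (no_alt hsym hirr hR hB deg).
  + by apply: tlift_disj; rewrite disjoint_sym.
  + exact: tlift_disj.
  + move=> a b hab na nb r1 r2.
    by case: (hmin2 a b hab) => _; apply; apply: contr_good.
- apply: (no_alt hsym hirr hB hR).
  + by move=> h y z /union_perm; apply: deg.
  + exact: tlift_disj.
  + by apply: tlift_disj; rewrite disjoint_sym.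
  + move=> a b hab na nb r1 r2.
    case: (hmin2 a b hab) => _; apply; apply: contr_good => //.
    * by apply/negP => /union_perm; apply/negP.
    * by apply/negP => /union_perm; apply/negP.
Qed.
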